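(* Let $g \geq 1$, let $A \subseteq [N]$ be a nonempty $B_3[g]$-set, let $0 < \delta < \tfrac14$, let $l = \lfloor \frac{1}{2\delta} \rfloor$, and suppose $N > \frac{2}{\delta}$. For $1 \leq k \leq l$ let \[ C_k = \bigl( A \cap ((k-1)\delta N,\, k\delta N] \bigr) \cup \bigl( A \cap [(1-k\delta)N,\, (1-(k-1)\delta)N) \bigr), \] and define $\alpha_k(\delta)$ by $\alpha_k(\delta)|A| = |C_k|$. Then for every $1 \leq k \leq l$, \[ \alpha_k(\delta)^3 |A|^3 \leq 72\, g\, \delta N, \] i.e. whenever $\alpha_k(\delta) > 0$, $|A| \leq \left( \frac{72 g \delta N}{\alpha_k(\delta)^3}\right)^{1/3}$.
   Context: $[N] = \{1,2,\dots,N\}$. For positive integers $h,g$, a set $A \subseteq [N]$ is a $B_h[g]$-set if for every integer $n$ there are at most $g$ distinct multisets $\{a_1,\dots,a_h\}$ of size $h$ with all $a_i \in A$ and $a_1 + \dots + a_h = n$. *)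

(* Defs.v *)
From Stdlib Require Import Reals Lra Lia Arith List Bool.
Import ListNotations.
Open Scope R_scope.

Definition Rleb (x y : R) : bool := if Rle_dec x y then true else false.
Definition Rltb (x y : R) : bool := if Rlt_dec x y then true else false.

(* A finite set A ⊆ [N] is represented by a duplicate-free list of naturals,
   all lying in {1,...,N}. *)
Definition subset_interval (N : nat) (A : list nat) : Prop :=
  NoDup A /\ forall a, In a A -> (1 <= a <= N)%nat.

(* Number of multisets {a1,a2,a3} of elements of A with a1+a2+a3 = n:
   counted as sorted triples a1 <= a2 <= a3 (A has no duplicates). *)
Definition rep3 (A : list nat) (n : nat) : nat :=
  length (filter (fun t : nat * nat * nat =>
            let '(a, b, c) := t in
            (a <=? b)%nat && (b <=? c)%nat && (a + b + c =? n)%nat)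
          (list_prod (list_prod A A) A)).

Definition B3g_set (N g : nat) (A : list nat) : Prop :=
  subset_interval N A /\ forall n : nat, (rep3 A n <= g)%nat.

Definition ell (delta : R) : nat := Z.to_nat (Int_part (/ (2 * delta))).

Definition C_k (N : nat) (A : list nat) (delta : R) (k : nat) : list nat :=
  filter (fun a : nat =>
     (Rltb ((INR k - 1) * delta * INR N) (INR a)
        && Rleb (INR a) (INR k * delta * INR N))
     || (Rleb ((1 - INR k * delta) * INR N) (INR a)
        && Rltb (INR a) ((1 - (INR k - 1) * delta) * INR N))) A.

Definition alpha_k (N : nat) (A : list nat) (delta : R) (k : nat) : R :=
  INR (length (C_k N A delta k)) / INR (length A).

(* Main.v *)
Require Import Defs.
From Stdlib Require Import Reals List.
From Stdlib Require Import Reals List Lra Lia Arith Bool.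
Import ListNotations.
Open Scope R_scope.

Fixpoint lsum {T} (f : T -> nat) (l : list T) : nat :=
  match l with [] => 0%nat | x :: l' => (f x + lsum f l')%nat end.

Lemma lsum_ext {T} (f g : T -> nat) l : (forall x, In x l -> f x = g x) -> lsum f l = lsum g l.
Proof. induction l; simpl; intros H; [reflexivity| f_equal; auto]. Qed.



Lemma lsum_le {T} (f g : T -> nat) l : (forall x, In x l -> (f x <= g x)%nat) -> (lsum f l <= lsum g l)%nat.
Proof. induction l; simpl; intros H; auto. assert (f a <= g a)%nat by auto.
  assert (lsum f l <= lsum g l)%nat by auto. lia. Qed.

Lemma lsum_plus {T} (f g : T -> nat) l : lsum (fun x => f x + g x)%nat l = (lsum f l + lsum g l)%nat.
Proof. induction l; simpl; auto. rewrite IHl. lia. Qed.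

Lemma lsum_const {T} (c : nat) (l : list T) : lsum (fun _ => c) l = (c * length l)%nat.
Proof. induction l; simpl; lia. Qed.

Lemma lsum_swap {A B} (f : A -> B -> nat) l1 l2 :
  lsum (fun a => lsum (fun b => f a b) l2) l1 = lsum (fun b => lsum (fun a => f a b) l1) l2.
Proof. induction l1; simpl.
  - induction l2; simpl; auto.
  - rewrite IHl1. rewrite <- lsum_plus. reflexivity. Qed.

Lemma lsum_app {T} (f : T -> nat) l1 l2 : lsum f (l1 ++ l2) = (lsum f l1 + lsum f l2)%nat.
Proof. induction l1; simpl; auto. rewrite IHl1; lia. Qed.

Lemma lsum_map {A B} (f : B -> nat) (g : A -> B) l : lsum f (map g l) = lsum (fun x => f (g x)) l.
Proof. induction l; simpl; auto. Qed.

Lemma lsum_prod {A B} (f : A * B -> nat) l1 l2 :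
  lsum f (list_prod l1 l2) = lsum (fun a => lsum (fun b => f (a, b)) l2) l1.
Proof. induction l1; simpl; auto. rewrite lsum_app, lsum_map, IHl1. reflexivity. Qed.

Lemma len_filter {T} (q : T -> bool) l : length (filter q l) = lsum (fun y => if q y then 1 else 0)%nat l.
Proof. induction l; simpl; auto. destruct (q a); simpl; auto. Qed.

Lemma lsum_filter_le {T} (f : T -> nat) p l : (lsum f (filter p l) <= lsum f l)%nat.
Proof. induction l; simpl; auto. destruct (p a); simpl; lia. Qed.

Lemma filter_filter' {T} (p q : T -> bool) l : filter p (filter q l) = filter (fun x => q x && p x) l.
Proof. induction l as [|a l IH]; simpl; auto. destruct (q a); simpl.
  - destruct (p a); simpl; rewrite IH; auto.
  - exact IH. Qed.

Lemma filter_mono {T} (p q : T -> bool) l : (forall x, p x = true -> q x = true) ->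
  (length (filter p l) <= length (filter q l))%nat.
Proof. intros H; induction l; simpl; auto. destruct (p a) eqn:E.
  - rewrite (H a E). simpl. lia.
  - destruct (q a); simpl; lia. Qed.

Lemma count_one (C : list nat) a : NoDup C -> In a C -> lsum (fun b => if Nat.eqb a b then 1 else 0)%nat C = 1%nat.
Proof. induction C as [|x C IH]; simpl; intros ND Hin; [contradiction|].
  inversion ND; subst. destruct Hin as [->|Hin].
  - rewrite Nat.eqb_refl. rewrite (lsum_ext _ (fun _ => 0%nat)). rewrite lsum_const. lia.
    intros y Hy. destruct (Nat.eqb_spec a y); subst; auto. contradiction.
  - destruct (Nat.eqb_spec a x); subst. contradiction. simpl. auto. Qed.

Definition ind3 (a b c : nat) : nat := if (a <=? b)%nat && (b <=? c)%nat then 1%nat else 0%nat.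
Definition e2 (a b : nat) : nat := if Nat.eqb a b then 1%nat else 0%nat.

Lemma pointwise a b c : (1 + e2 a b + e2 b c + e2 a c <=
  ind3 a b c + ind3 b a c + ind3 a c b + ind3 c b a + ind3 b c a + ind3 c a b)%nat.
Proof. unfold ind3, e2.
  destruct (Nat.leb_spec a b); destruct (Nat.leb_spec b a); destruct (Nat.leb_spec a c);
  destruct (Nat.leb_spec c a); destruct (Nat.leb_spec b c); destruct (Nat.leb_spec c b);
  destruct (Nat.eqb_spec a b); destruct (Nat.eqb_spec b c); destruct (Nat.eqb_spec a c);
  simpl; lia. Qed.

Lemma lsum_scale {T} (k : nat) (f : T -> nat) l : lsum (fun x => k * f x)%nat l = (k * lsum f l)%nat.
Proof. induction l; simpl; lia. Qed.

Definition G3 (C : list nat) (h : nat -> nat -> nat -> nat) : nat :=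
  lsum (fun a => lsum (fun b => lsum (fun c => h a b c) C) C) C.

Lemma G3_12 C h : G3 C (fun a b c => h b a c) = G3 C h.
Proof. unfold G3. exact (lsum_swap (fun a b => lsum (fun c => h b a c) C) C C). Qed.

Lemma G3_23 C h : G3 C (fun a b c => h a c b) = G3 C h.
Proof. unfold G3. apply lsum_ext; intros a _.
  exact (lsum_swap (fun b c => h a c b) C C). Qed.

Lemma G3_plus C f g : G3 C (fun a b c => f a b c + g a b c)%nat = (G3 C f + G3 C g)%nat.
Proof. unfold G3. rewrite <- lsum_plus. apply lsum_ext; intros a _.
  rewrite <- lsum_plus. apply lsum_ext; intros b _. apply lsum_plus. Qed.

Lemma G3_le C f g : (forall a b c, f a b c <= g a b c)%nat -> (G3 C f <= G3 C g)%nat.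
Proof. intros H. unfold G3. apply lsum_le; intros; apply lsum_le; intros; apply lsum_le; auto. Qed.

Lemma G3_lower C : NoDup C ->
  (length C * length C * length C + 3 * (length C * length C) <= 6 * G3 C ind3)%nat.
Proof. intros ND.
  assert (E1 : G3 C (fun a b c => ind3 b c a) = G3 C ind3).
  { rewrite (G3_12 C (fun a b c => ind3 a c b)). apply G3_23. }
  assert (E2 : G3 C (fun a b c => ind3 c a b) = G3 C ind3).
  { rewrite (G3_23 C (fun a b c => ind3 b a c)). apply G3_12. }
  assert (E3 : G3 C (fun a b c => ind3 c b a) = G3 C ind3).
  { rewrite (G3_12 C (fun a b c => ind3 c a b)). exact E2. }
  pose proof (G3_12 C ind3) as E4. pose proof (G3_23 C ind3) as E5.
  assert (L : (G3 C (fun a b c => 1 + e2 a b + e2 b c + e2 a c) <=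
     G3 C (fun a b c => ind3 a b c + ind3 b a c + ind3 a c b + ind3 c b a + ind3 b c a + ind3 c a b))%nat).
  { apply G3_le. intros; apply pointwise. }
  rewrite !G3_plus in L.
  assert (K1 : (G3 C (fun _ _ _ => 1%nat) = length C * length C * length C)%nat).
  { unfold G3. rewrite (lsum_ext _ (fun _ => length C * length C)%nat). rewrite lsum_const; lia.
    intros a _. rewrite (lsum_ext _ (fun _ => length C)%nat). rewrite lsum_const; lia.
    intros b _. rewrite lsum_const; lia. }
  assert (K2 : (G3 C (fun a b _ => e2 a b) = length C * length C)%nat).
  { unfold G3. rewrite (lsum_ext _ (fun _ => length C)%nat). rewrite lsum_const; lia.
    intros a Ha. rewrite (lsum_ext _ (fun b => length C * e2 a b)%nat).
    rewrite lsum_scale. unfold e2. rewrite count_one; auto; lia.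
    intros b _. rewrite lsum_const; lia. }
  assert (K3 : (G3 C (fun _ b c => e2 b c) = length C * length C)%nat).
  { unfold G3. rewrite (lsum_ext _ (fun _ => length C)%nat). rewrite lsum_const; lia.
    intros a Ha. rewrite (lsum_ext _ (fun b => 1)%nat). rewrite lsum_const; lia.
    intros b Hb. unfold e2. apply count_one; auto. }
  assert (K4 : (G3 C (fun a _ c => e2 a c) = length C * length C)%nat).
  { unfold G3. rewrite (lsum_ext _ (fun _ => length C)%nat). rewrite lsum_const; lia.
    intros a Ha. rewrite (lsum_ext _ (fun b => 1)%nat). rewrite lsum_const; lia.
    intros b Hb. unfold e2. apply count_one; auto. }
  lia.
Qed.

Lemma filter_filter_le {T} (p q : T -> bool) l :
  (length (filter q (filter p l)) <= length (filter q l))%nat.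
Proof. induction l; simpl; auto. destruct (p a); simpl; destruct (q a); simpl; lia. Qed.

Lemma fiber {T} (f : T -> nat) (S : list nat) : forall (L : list T) (B : R), 0 <= B ->
  (forall t, In t L -> In (f t) S) ->
  (forall n, INR (length (filter (fun t => Nat.eqb (f t) n) L)) <= B) ->
  INR (length L) <= B * INR (length S).
Proof.
  induction S as [|n S IH]; intros L B HB Hin Hf.
  - destruct L as [|t L]; simpl. lra. destruct (Hin t (or_introl eq_refl)).
  - pose proof (filter_length (fun t => Nat.eqb (f t) n) L) as E.
    assert (H2 : INR (length (filter (fun x => negb (Nat.eqb (f x) n)) L)) <= B * INR (length S)).
    { apply IH; auto.
      - intros t Ht. apply filter_In in Ht as [Ht Hn]. destruct (Hin t Ht) as [->|H]; auto.
        rewrite Nat.eqb_refl in Hn. discriminate.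
      - intros m. eapply Rle_trans; [|apply (Hf m)]. apply le_INR. apply filter_filter_le. }
    specialize (Hf n). rewrite <- E, plus_INR. simpl length. rewrite S_INR. lra.
Qed.

Lemma ex_min (L : list nat) : L <> [] -> exists m, In m L /\ forall a, In a L -> (m <= a)%nat.
Proof. induction L as [|x L IH]; intros H. congruence.
  destruct L as [|y L']. exists x. simpl. split; auto. intros a [->|[]]; lia.
  destruct IH as [m [Hm Hm']]. congruence.
  destruct (Nat.le_gt_cases x m).
  - exists x. split. left; auto. intros a [->|Ha]. lia. specialize (Hm' a Ha). lia.
  - exists m. split. right; auto. intros a [->|Ha]. lia. auto. Qed.

Lemma ex_max (L : list nat) : L <> [] -> exists m, In m L /\ forall a, In a L -> (a <= m)%nat.
Proof. induction L as [|x L IH]; intros H. congruence.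
  destruct L as [|y L']. exists x. simpl. split; auto. intros a [->|[]]; lia.
  destruct IH as [m [Hm Hm']]. congruence.
  destruct (Nat.le_gt_cases x m).
  - exists m. split. right; auto. intros a [->|Ha]. lia. auto.
  - exists x. split. left; auto. intros a [->|Ha]. lia. specialize (Hm' a Ha). lia. Qed.

Lemma range_cover (L : list nat) (u W : R) : 0 <= W ->
  (forall a, In a L -> u <= INR a <= u + W) ->
  exists S : list nat, (forall a, In a L -> In a S) /\ INR (length S) <= W + 1.
Proof.
  intros HW H. destruct L as [|a0 L'].
  - exists []. simpl. split. tauto. lra.
  - assert (NE : a0 :: L' <> []) by congruence.
    destruct (ex_min _ NE) as [m [Hm Hm']]. destruct (ex_max _ NE) as [M [HM HM']].
    assert (mM : (m <= M)%nat) by (apply Hm'; auto).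
    exists (seq m (S (M - m))). split.
    + intros a Ha. apply in_seq. specialize (Hm' a Ha). specialize (HM' a Ha). lia.
    + rewrite length_seq, S_INR, minus_INR by auto.
      pose proof (H m Hm). pose proof (H M HM). lra.
Qed.

Lemma nodup_bound (L : list nat) (u W : R) : 0 <= W -> NoDup L ->
  (forall a, In a L -> u <= INR a <= u + W) -> INR (length L) <= W + 1.
Proof. intros HW ND H. destruct (range_cover L u W HW H) as [S [HS HL]].
  eapply Rle_trans; [|exact HL]. apply le_INR. apply NoDup_incl_length; auto. Qed.

Lemma lsum_sub {T} (f g : T -> nat) p l : (forall x, (f x <= g x)%nat) -> (lsum f (filter p l) <= lsum g l)%nat.
Proof. intros H. induction l; simpl; auto. destruct (p a); simpl; specialize (H a); lia. Qed.

Lemma sub3 (q : nat * nat * nat -> bool) p (A : list nat) :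
  (length (filter q (list_prod (list_prod (filter p A) (filter p A)) (filter p A)))
   <= length (filter q (list_prod (list_prod A A) A)))%nat.
Proof. rewrite !len_filter, !lsum_prod.
  apply lsum_sub; intros a. apply lsum_sub; intros b. apply lsum_sub; intros c. lia. Qed.

Lemma final_arith (c G x T : R) : x > 2 -> G >= 1 -> 0 <= c ->
  c * c * c + 3 * (c * c) <= 6 * T -> T <= G * (3 * x + 1) * 4 -> c <= 2 * x + 2 ->
  c * c * c <= 72 * G * x.
Proof. intros Hx HG Hc H1 H2 H3.
  destruct (Rle_lt_dec (c*c*c) (72*G*x)) as [H|H]; auto. exfalso.
  assert (HcG : c * c * c + 3 * (c * c) <= 24 * G * (3 * x + 1)) by lra.
  assert (H4 : 3 * x * (c * c * c + 3 * (c * c)) <= 72 * G * x * (3 * x + 1)).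
  { replace (72 * G * x * (3 * x + 1)) with (3 * x * (24 * G * (3 * x + 1))) by ring.
    apply Rmult_le_compat_l; lra. }
  assert (H5 : 72 * G * x * (3 * x + 1) < c * c * c * (3 * x + 1)).
  { apply Rmult_lt_compat_r; lra. }
  assert (H6 : 9 * x * (c * c) < c * c * c) by nra.
  assert (cpos : 0 < c * c) by nra.
  assert (H7 : 9 * x < c).
  { apply (Rmult_lt_reg_r (c*c)); auto. nra. }
  lra.
Qed.

Theorem lemma2p2 (N g : nat) (A : list nat) (delta : R) (k : nat) :
  (1 <= g)%nat ->
  B3g_set N g A ->
  A <> nil ->
  0 < delta < / 4 ->
  INR N > 2 / delta ->
  (1 <= k <= ell delta)%nat ->
  (alpha_k N A delta k) ^ 3 * (INR (length A)) ^ 3 <= 72 * INR g * delta * INR N.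
Proof.
  intros Hg [[NDA HA] Hrep] Hne [Hd0 Hd1] HN Hk.
  set (x := delta * INR N).
  assert (Hx : x > 2).
  { unfold x. apply (Rmult_gt_compat_l delta) in HN; auto.
    replace (delta * (2 / delta)) with 2 in HN by (field; lra). lra. }
  set (p1 := (INR k - 1) * delta * INR N). set (p2 := (1 - INR k * delta) * INR N).
  set (cls1 := fun a : nat => Rltb ((INR k - 1) * delta * INR N) (INR a)
                && Rleb (INR a) (INR k * delta * INR N)).
  set (C := C_k N A delta k).
  assert (Hcls : forall a, In a C -> (cls1 a = true -> p1 <= INR a <= p1 + x)
                                   /\ (cls1 a = false -> p2 <= INR a <= p2 + x)).
  { intros a Ha. unfold C, C_k in Ha. apply filter_In in Ha as [_ Ha].
    unfold cls1, p1, p2, x. unfold Rltb, Rleb in *.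
    repeat match goal with
    | H : context [Rlt_dec ?u ?v] |- _ => destruct (Rlt_dec u v)
    | H : context [Rle_dec ?u ?v] |- _ => destruct (Rle_dec u v)
    end; simpl in *; split; intro; try discriminate; lra. }
  assert (NDC : NoDup C) by (apply NoDup_filter; auto).
  assert (Hc : INR (length C) <= 2 * x + 2).
  { pose proof (filter_length cls1 C) as E.
    assert (B1 : INR (length (filter cls1 C)) <= x + 1).
    { apply (nodup_bound _ p1); try lra. apply NoDup_filter; auto.
      intros a Ha. apply filter_In in Ha as [Ha H]. apply (Hcls a Ha); auto. }
    assert (B2 : INR (length (filter (fun a => negb (cls1 a)) C)) <= x + 1).
    { apply (nodup_bound _ p2); try lra. apply NoDup_filter; auto.
      intros a Ha. apply filter_In in Ha as [Ha H]. apply (Hcls a Ha).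
      destruct (cls1 a); auto; discriminate. }
    rewrite <- E, plus_INR. lra. }
  set (T := filter (fun t : nat * nat * nat => let '(a, b, c) := t in (a <=? b)%nat && (b <=? c)%nat)
              (list_prod (list_prod C C) C)).
  assert (HTG : length T = G3 C ind3).
  { unfold T. rewrite len_filter, !lsum_prod. reflexivity. }
  set (key := fun t : nat * nat * nat => let '(a, b, c) := t in
      ((if cls1 a then 1 else 0) + (if cls1 b then 1 else 0) + (if cls1 c then 1 else 0))%nat).
  set (sm := fun t : nat * nat * nat => let '(a, b, c) := t in (a + b + c)%nat).
  assert (HT : INR (length T) <= INR g * (3 * x + 1) * 4).
  { replace 4 with (INR (length [0;1;2;3]%nat)) by (simpl; lra).
    apply (fiber key).
    - apply Rmult_le_pos. apply pos_INR. lra.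
    - intros [[a b] c] _. simpl. destruct (cls1 a), (cls1 b), (cls1 c); simpl; tauto.
    - intros n.
      set (Tn := filter (fun t => Nat.eqb (key t) n) T).
      assert (Hr : forall s, In s (map sm Tn) ->
          INR n * p1 + (3 - INR n) * p2 <= INR s <= INR n * p1 + (3 - INR n) * p2 + 3 * x).
      { intros s Hs. apply in_map_iff in Hs as [[[a b] c] [<- Ht]].
        unfold Tn, T in Ht. apply filter_In in Ht as [Ht Hkey].
        apply filter_In in Ht as [Ht _].
        apply in_prod_iff in Ht as [Ht Hc3]. apply in_prod_iff in Ht as [Ha Hb].
        apply Nat.eqb_eq in Hkey. simpl in Hkey |- *. rewrite !plus_INR.
        destruct (Hcls a Ha) as [Ha1 Ha2]. destruct (Hcls b Hb) as [Hb1 Hb2].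
        destruct (Hcls c Hc3) as [Hc1 Hc2].
        destruct (cls1 a), (cls1 b), (cls1 c); subst n; simpl;
        specialize (Ha1 ltac:(auto)) || specialize (Ha2 ltac:(auto));
        specialize (Hb1 ltac:(auto)) || specialize (Hb2 ltac:(auto));
        specialize (Hc1 ltac:(auto)) || specialize (Hc2 ltac:(auto)); lra. }
      destruct (range_cover _ _ (3 * x) ltac:(lra) Hr) as [S [HS HSl]].
      eapply Rle_trans.
      + apply (fiber sm S Tn (INR g)). apply pos_INR.
        * intros t Ht. apply HS. apply in_map; auto.
        * intros m. apply le_INR. eapply Nat.le_trans; [|apply (Hrep m)].
          unfold Tn, T. rewrite !filter_filter'. unfold rep3.
          eapply Nat.le_trans; [|apply sub3]. unfold C, C_k.
          apply filter_mono. intros [[a b] c]. simpl.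
          intros H. rewrite !andb_true_iff in H |- *. destruct H as [H1 H2]. apply andb_prop in H2 as [_ H2]. tauto.
      + apply Rmult_le_compat_l. apply pos_INR. lra. }
  pose proof (G3_lower C NDC) as HL. rewrite <- HTG in HL.
  apply le_INR in HL. rewrite !plus_INR, !mult_INR in HL.
  replace (INR 3) with 3 in HL by (simpl; lra). replace (INR 6) with 6 in HL by (simpl; lra).
  assert (Hfin := final_arith (INR (length C)) (INR g) x (INR (length T)) Hx
     ltac:(apply Rle_ge; replace 1 with (INR 1) by reflexivity; apply le_INR; auto)
     (pos_INR _) HL HT Hc).
  assert (HA0 : INR (length A) <> 0).
  { destruct A as [|a0 l0]. congruence. simpl length. rewrite S_INR. pose proof (pos_INR (length l0)). lra. }
  unfold alpha_k. fold C.
  replace ((INR (length C) / INR (length A)) ^ 3 * INR (length A) ^ 3)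
    with (INR (length C) * INR (length C) * INR (length C)) by (field; auto).
  unfold x in Hfin. lra.
Qed.
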